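(* If an atomic flow $A$ is cycle-free and $A\to_{\mathsf w}^\star B$, then $B$ is cycle-free.
   Context: An atomic flow is a tuple $(V,E,\eta,up,lo)$: finite sets of vertices and edges, a labelling of vertices by interaction, cut, weakening, coweakening, contraction or cocontraction, and maps $up:E\to V\cup\{\top\}$, $lo:E\to V\cup\{\bot\}$. Upper edges of $\nu$: $lo(\epsilon)=\nu$; lower edges: $up(\epsilon)=\nu$. (Upper, lower) edge numbers: $(0,2)$ interaction, $(2,0)$ cut, $(0,1)$ weakening, $(1,0)$ coweakening, $(2,1)$ contraction, $(1,2)$ cocontraction; no directed cycles; there is $\pi:E\to\{+,-\}$ giving all edges of a (co)contraction the same sign and the two edges of an interaction/cut different signs. A path from $\nu$ to $\nu'$ is a sequence of edges $\epsilon_1,\dots,\epsilon_h$ with $lo(\epsilon_i)=up(\epsilon_{i+1})$, $up(\epsilon_1)=\nu$, $lo(\epsilon_h)=\nu'$; its reversal is a path from $\nu'$ to $\nu$. An $\mathsf{ai}$-path from $\nu$ to $\nu'$ is either a path from $\nu$ to $\nu'$ or a sequence $\epsilon_1,\dots,\epsilon_k,\epsilon_{k+1},\dots,\epsilon_h$ with $\epsilon_k\neq\epsilon_{k+1}$ such that, for some interaction or cut vertex $\nu''$, $\epsilon_1,\dots,\epsilon_k$ is an $\mathsf{ai}$-path from $\nu$ to $\nu''$ and $\epsilon_{k+1},\dots,\epsilon_h$ is an $\mathsf{ai}$-path from $\nu''$ to $\nu'$. An $\mathsf{ai}$-cycle is an $\mathsf{ai}$-path from a vertex to itself in which no edge appears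 twice. A flow is cycle-free if it has no $\mathsf{ai}$-cycle. $\to_{\mathsf w}^\star$ is the reflexive-transitive closure of $\to_{\mathsf w}$, where $A\to_{\mathsf w}B$ means $B$ results from $A$ by one application of one of these subgraph replacements: (i) a weakening whose lower edge is an upper edge of a contraction: delete both, merging the contraction's other upper edge and its lower edge into one edge; (ii) a coweakening whose upper edge is a lower edge of a cocontraction: delete both, merging the cocontraction's upper edge and other lower edge; (iii) a weakening whose lower edge is an upper edge of a cut: delete both, the cut's other upper edge becoming the upper edge of a new coweakening; (iv) an interaction one of whose lower edges is the upper edge of a coweakening: delete both, the other lower edge becoming the lower edge of a new weakening; (v) an edge from a weakening to a coweakening: delete it and both vertices; (vi) a weakening whose lower edge is the upper edge of a cocontraction: replace by two new weakenings whose lower edges are the cocontraction's lower edges; (vii) a coweakening whose upper edge is the lower edge of a contraction: replace by two new coweakenings whose upper edges are the contraction's upper edges. *)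

(* Defs.v *)
From Stdlib Require Export Relations.
From HB Require Import structures.
From mathcomp Require Import all_boot.
Set Implicit Arguments. Unset Strict Implicit. Unset Printing Implicit Defensive.

Inductive vkind := Int | Cut | Wk | Cowk | Ctr | Coctr.

(* Endpoints of edges: a vertex (named by a nat), or top / bottom. *)
Inductive node := Top | Bot | Vx of nat.

Definition node_eqb (x y : node) : bool :=
  match x, y with
  | Top, Top => true | Bot, Bot => true
  | Vx m, Vx n => m == n | _, _ => false end.

Lemma node_eqP : Equality.axiom node_eqb.
Proof.
case=> [||m] [||n] /=; try by constructor.
by apply: (iffP eqP) => [->|[]].
Qed.

HB.instance Definition _ := hasDecEq.Build node node_eqP.

(* A (candidate) atomic flow: finite lists of vertex and edge names, labelling,
   and the maps up, lo (only their values on fV / fE are meaningful). *)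
Record flow := Flow {
  fV : seq nat; fE : seq nat;
  lab : nat -> vkind;
  up : nat -> node; lo : nat -> node }.

Definition nupper (k : vkind) : nat :=
  match k with Int => 0 | Cut => 2 | Wk => 0 | Cowk => 1 | Ctr => 2 | Coctr => 1 end.
Definition nlower (k : vkind) : nat :=
  match k with Int => 2 | Cut => 0 | Wk => 1 | Cowk => 0 | Ctr => 1 | Coctr => 2 end.

Fixpoint walk (F : flow) (z : node) (s : seq nat) (y : node) : Prop :=
  match s with
  | [::] => z = y
  | e :: s' => e \in fE F /\ up F e = z /\ walk F (lo F e) s' y
  end.

Definition dpath (F : flow) (x : node) (s : seq nat) (y : node) : Prop :=
  s <> [::] /\ walk F x s y.

Definition fpath (F : flow) (x : node) (s : seq nat) (y : node) : Prop :=
  dpath F x s y \/ dpath F y (rev s) x.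

Definition is_flow (F : flow) : Prop :=
  (uniq (fV F) /\ uniq (fE F) /\
   (forall e, e \in fE F ->
      up F e <> Bot /\ lo F e <> Top /\
      (forall v, up F e = Vx v -> v \in fV F) /\
      (forall v, lo F e = Vx v -> v \in fV F)) /\
   (forall v, v \in fV F ->
      count (fun e => lo F e == Vx v) (fE F) = nupper (lab F v) /\
      count (fun e => up F e == Vx v) (fE F) = nlower (lab F v)) /\
   (~ exists v s, dpath F (Vx v) s (Vx v))  /\
   (exists pi : nat -> bool, forall v, v \in fV F ->
      let inc e := (e \in fE F) && ((up F e == Vx v) || (lo F e == Vx v)) in
      ((lab F v = Ctr \/ lab F v = Coctr) ->
         forall e1 e2, inc e1 -> inc e2 -> pi e1 = pi e2) /\
      ((lab F v = Int \/ lab F v = Cut) ->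
         forall e1 e2, inc e1 -> inc e2 -> e1 <> e2 -> pi e1 <> pi e2))).

Inductive aipath (F : flow) : node -> seq nat -> node -> Prop :=
| AIpath x s y : fpath F x s y -> aipath F x s y
| AIcat x z y s1 a b s2 :
    aipath F x (rcons s1 a) (Vx z) ->
    aipath F (Vx z) (b :: s2) y ->
    z \in fV F -> (lab F z = Int \/ lab F z = Cut) ->
    a <> b ->
    aipath F x (rcons s1 a ++ b :: s2) y.

Definition aicycle (F : flow) (v : nat) (s : seq nat) : Prop :=
  (v \in fV F /\ aipath F (Vx v) s (Vx v) /\ uniq s).

Definition cycle_free (F : flow) : Prop := ~ exists v s, aicycle F v s.

(* B is obtained from A by keeping the vertices in keepV and the edges in keepE,
   adding the fresh vertices newV (labelled by newlab) and fresh edges newE,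
   with the endpoints of all edges of B given by nup / nlo. *)
Definition replaced (A B : flow) (keepV : pred nat) (newV : seq nat)
    (newlab : nat -> vkind) (keepE : pred nat) (newE : seq nat)
    (nup nlo : nat -> node) : Prop :=
  (uniq (fV B) /\ uniq (fE B) /\ uniq newV /\ uniq newE /\
      (forall v, v \in newV -> v \notin fV A) /\
      (forall e, e \in newE -> e \notin fE A) /\
      (forall v, v \in fV B <-> ((v \in fV A) && keepV v) \/ v \in newV) /\
      (forall e, e \in fE B <-> ((e \in fE A) && keepE e) \/ e \in newE) /\
      (forall v, v \in fV B -> lab B v = if v \in newV then newlab v else lab A v)  /\
      (forall e, e \in fE B -> up B e = nup e /\ lo B e = nlo e)).

Definition isv (A : flow) (v : nat) (k : vkind) := v \in fV A /\ lab A v = k.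

Definition wstep (A B : flow) : Prop :=
  (exists w c e1 e2 e3 f,
     (isv A w Wk /\ isv A c Ctr /\ e1 \in fE A /\ e2 \in fE A /\ e3 \in fE A /\
         up A e1 = Vx w /\ lo A e1 = Vx c /\ lo A e2 = Vx c /\ e2 <> e1 /\ up A e3 = Vx c  /\
         replaced A B (predC (pred2 w c)) [::] (fun _ => Wk)
           (predC [pred e | (e == e1) || (e == e2) || (e == e3)]) [:: f]
           (fun e => if e == f then up A e2 else up A e)
           (fun e => if e == f then lo A e3 else lo A e))) \/
  (exists cw cc e1 e0 e2 f,
     (isv A cw Cowk /\ isv A cc Coctr /\ e1 \in fE A /\ e0 \in fE A /\ e2 \in fE A /\
         up A e1 = Vx cc /\ lo A e1 = Vx cw /\ lo A e0 = Vx cc /\ up A e2 = Vx cc /\ e2 <> e1  /\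
         replaced A B (predC (pred2 cw cc)) [::] (fun _ => Wk)
           (predC [pred e | (e == e0) || (e == e1) || (e == e2)]) [:: f]
           (fun e => if e == f then up A e0 else up A e)
           (fun e => if e == f then lo A e2 else lo A e))) \/
  (exists w k e1 e2 u,
     (isv A w Wk /\ isv A k Cut /\ e1 \in fE A /\ e2 \in fE A /\
         up A e1 = Vx w /\ lo A e1 = Vx k /\ lo A e2 = Vx k /\ e2 <> e1  /\
         replaced A B (predC (pred2 w k)) [:: u] (fun _ => Cowk)
           (predC (pred1 e1)) [::]
           (up A)
           (fun e => if e == e2 then Vx u else lo A e))) \/
  (exists i cw e1 e2 u,
     (isv A i Int /\ isv A cw Cowk /\ e1 \in fE A /\ e2 \in fE A /\
         up A e1 = Vx i /\ lo A e1 = Vx cw /\ up A e2 = Vx i /\ e2 <> e1  /\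
         replaced A B (predC (pred2 i cw)) [:: u] (fun _ => Wk)
           (predC (pred1 e1)) [::]
           (fun e => if e == e2 then Vx u else up A e)
           (lo A))) \/
  (exists w cw e,
     (isv A w Wk /\ isv A cw Cowk /\ e \in fE A /\ up A e = Vx w /\ lo A e = Vx cw  /\
         replaced A B (predC (pred2 w cw)) [::] (fun _ => Wk)
           (predC (pred1 e)) [::] (up A) (lo A))) \/
  (exists w cc e0 e1 e2 u1 u2,
     (isv A w Wk /\ isv A cc Coctr /\ e0 \in fE A /\ e1 \in fE A /\ e2 \in fE A /\
         up A e0 = Vx w /\ lo A e0 = Vx cc /\ up A e1 = Vx cc /\ up A e2 = Vx cc /\ e1 <> e2  /\
         replaced A B (predC (pred2 w cc)) [:: u1; u2] (fun _ => Wk)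
           (predC (pred1 e0)) [::]
           (fun e => if e == e1 then Vx u1 else if e == e2 then Vx u2 else up A e)
           (lo A))) \/
  (exists cw c e0 e1 e2 u1 u2,
     (isv A cw Cowk /\ isv A c Ctr /\ e0 \in fE A /\ e1 \in fE A /\ e2 \in fE A /\
         up A e0 = Vx c /\ lo A e0 = Vx cw /\ lo A e1 = Vx c /\ lo A e2 = Vx c /\ e1 <> e2  /\
         replaced A B (predC (pred2 cw c)) [:: u1; u2] (fun _ => Cowk)
           (predC (pred1 e0)) [::]
           (up A)
           (fun e => if e == e1 then Vx u1 else if e == e2 then Vx u2 else lo A e))).

Definition wstar : flow -> flow -> Prop := clos_refl_trans flow wstep.

(* Main.v *)
Require Import Defs.
From mathcomp Require Import all_boot.
Set Implicit Arguments. Unset Strict Implicit. Unset Printing Implicit Defensive.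

Definition nmap (phi : nat -> nat) (x : node) : node :=
  match x with Vx v => Vx (phi v) | _ => x end.

Lemma walk_cat F x s z s' y : walk F x s z -> walk F z s' y -> walk F x (s ++ s') y.
Proof.
elim: s x => [|e s IH] x /=; first by move=> ->.
by move=> [He [Hu Hw]] Hw'; split; [|split; [|exact: IH Hw Hw']].
Qed.

Lemma walk_mem F x s y : walk F x s y -> {subset s <= fE F}.
Proof.
elim: s x => [|e s IH] x //= [He [_ Hw]] z; rewrite inE => /orP [/eqP->//|].
exact: IH Hw z.
Qed.

Section Map.
Variables (A B : flow) (phi : nat -> nat) (img : nat -> seq nat).
Hypothesis Himg : forall e, e \in fE B -> img e <> [::] /\ uniq (img e) /\
  walk A (nmap phi (up B e)) (img e) (nmap phi (lo B e)).
Hypothesis Hdisj : forall e e', e \in fE B -> e' \in fE B -> e <> e' ->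
  forall x, x \in img e -> x \notin img e'.
Hypothesis Hglue : forall z, z \in fV B -> (lab B z = Int \/ lab B z = Cut) ->
  phi z \in fV A /\ (lab A (phi z) = Int \/ lab A (phi z) = Cut).
Hypothesis Hvert : forall v, v \in fV B -> phi v \in fV A.

Inductive R : seq nat -> seq nat -> Prop :=
| R0 : R [::] [::]
| RF e s t : e \in fE B -> R s t -> R (e :: s) (img e ++ t)
| RB e s t : e \in fE B -> R s t -> R (e :: s) (rev (img e) ++ t).

Lemma R_cat s1 t1 s2 t2 : R s1 t1 -> R s2 t2 -> R (s1 ++ s2) (t1 ++ t2).
Proof.
elim=> [//|e s t He _ IH|e s t He _ IH] H2 /=; rewrite -catA;
  [apply: RF|apply: RB] => //; exact: IH.
Qed.

Lemma R_sub s t : R s t -> {subset s <= fE B}.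
Proof.
elim=> [//|e s' t0 He _ IH|e s' t0 He _ IH] x; rewrite inE => /orP [/eqP->//|]; exact: IH.
Qed.

Lemma R_mem s t : R s t -> forall x, x \in t -> exists2 e, e \in s & x \in img e.
Proof.
elim=> [//|e s' t0 He _ IH|e s' t0 He _ IH] x; rewrite mem_cat ?mem_rev => /orP [Hx|Hx].
- by exists e; rewrite ?inE ?eqxx.
- by have [e' H1 H2] := IH x Hx; exists e'; rewrite ?inE ?H1 ?orbT.
- by exists e; rewrite ?inE ?eqxx.
- by have [e' H1 H2] := IH x Hx; exists e'; rewrite ?inE ?H1 ?orbT.
Qed.

Lemma R_uniq s t : R s t -> uniq s -> uniq t.
Proof.
elim=> [//|e s' t0 He Hr IH|e s' t0 He Hr IH] /= /andP [Hns Hu];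
  rewrite cat_uniq ?rev_uniq (proj1 (proj2 (Himg He))) IH //= andbT;
  apply/hasPn => x Hx; have [e' H1 H2] := R_mem Hr Hx;
  rewrite ?mem_rev; apply: (Hdisj (R_sub Hr H1) He) => //;
  by move=> E; move: Hns; rewrite -E H1.
Qed.

Lemma R_cons b s t : R (b :: s) t -> exists b' t', t = b' :: t' /\ b' \in img b.
Proof.
move=> H; inversion H; subst.
- have := proj1 (Himg H2); case: (img b) => [//|x l] _.
  by exists x, (l ++ t0); rewrite inE eqxx.
- have Hn := proj1 (Himg H2).
  case E: (rev (img b)) => [|x l].
    by move: E Hn => /(f_equal size); rewrite size_rev; case: (img b).
  exists x, (l ++ t0); split => //.
  by rewrite -mem_rev E inE eqxx.
Qed.

Lemma R_rcons s a t : R (rcons s a) t -> exists t' a', t = rcons t' a' /\ a' \in img a.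
Proof.
elim: s t => [|e s IH] t /= H; inversion H; subst.
- inversion H4; subst; rewrite cats0.
  have := proj1 (Himg H2); case/lastP: (img a) => [//|l x] _.
  by exists l, x; rewrite mem_rcons inE eqxx.
- inversion H4; subst; rewrite cats0.
  have Hn := proj1 (Himg H2).
  case/lastP E: (rev (img a)) => [|l x].
    by move: E Hn => /(f_equal size); rewrite size_rev; case: (img a).
  exists l, x; split => //.
  by rewrite -mem_rev E mem_rcons inE eqxx.
- have [t' [a' [-> Ha]]] := IH _ H4.
  by exists (img e ++ t'), a'; rewrite rcons_cat.
- have [t' [a' [-> Ha]]] := IH _ H4.
  by exists (rev (img e) ++ t'), a'; rewrite rcons_cat.
Qed.

Lemma walk_map x s y : walk B x s y ->
  walk A (nmap phi x) (flatten (map img s)) (nmap phi y).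
Proof.
elim: s x => [|e s IH] x /=; first by move=> ->.
move=> [He [Hu Hw]]; apply: walk_cat (IH _ Hw).
by rewrite -Hu; exact: (proj2 (proj2 (Himg He))).
Qed.

Lemma R_flat s : {subset s <= fE B} -> R s (flatten (map img s)).
Proof.
elim: s => [|e s IH] Hs /=; first exact: R0.
apply: RF; first by apply: Hs; rewrite inE eqxx.
by apply: IH => x Hx; apply: Hs; rewrite inE Hx orbT.
Qed.

Lemma R_flat_rev s : {subset s <= fE B} -> R s (rev (flatten (map img (rev s)))).
Proof.
elim: s => [|e s IH] Hs /=; first exact: R0.
rewrite rev_cons map_rcons flatten_rcons rev_cat.
apply: RB; first by apply: Hs; rewrite inE eqxx.
by apply: IH => x Hx; apply: Hs; rewrite inE Hx orbT.
Qed.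

Lemma flat_nil s : {subset s <= fE B} -> s <> [::] -> flatten (map img s) <> [::].
Proof.
case: s => [//|e s] Hs _ /=.
have := proj1 (Himg (Hs e (mem_head _ _))); by case: (img e).
Qed.

Lemma aipath_map x s y : aipath B x s y ->
  exists t, aipath A (nmap phi x) t (nmap phi y) /\ R s t.
Proof.
elim=> {x s y}.
- move=> x s y [[Hne Hw]|[Hne Hw]].
  + have Hs := walk_mem Hw.
    exists (flatten (map img s)); split; last exact: R_flat.
    by apply: AIpath; left; split; [exact: flat_nil|exact: walk_map].
  + have Hs' := walk_mem Hw.
    have Hs : {subset s <= fE B} by move=> z Hz; apply: Hs'; rewrite mem_rev.
    exists (rev (flatten (map img (rev s)))); split; last exact: R_flat_rev.
    apply: AIpath; right; rewrite revK; split; [exact: flat_nil|exact: walk_map].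
- move=> x z y s1 a b s2 _ [t1 [H1 R1]] _ [t2 [H2 R2]] Hz Hl Hab.
  have [t1' [a' [E1 Ha']]] := R_rcons R1.
  have [b' [t2' [E2 Hb']]] := R_cons R2.
  have [Hz' Hl'] := Hglue Hz Hl.
  exists (t1 ++ t2); split; last exact: R_cat.
  rewrite E1 E2; apply: AIcat Hz' Hl' _; rewrite -?E1 -?E2 //.
  move=> E; have Ha : a \in fE B by apply: (R_sub R1); rewrite mem_rcons inE eqxx.
  have Hb : b \in fE B by apply: (R_sub R2); rewrite inE eqxx.
  by have := Hdisj Ha Hb Hab Ha'; rewrite E Hb'.
Qed.

Lemma cycle_map : cycle_free A -> cycle_free B.
Proof.
move=> HA [v [s [Hv [Hp Hu]]]]; apply: HA.
have [t [Ht Rt]] := aipath_map Hp.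
by exists (phi v), t; split; [exact: Hvert|split; [exact: Ht|exact: R_uniq Rt Hu]].
Qed.
End Map.

Lemma step_cf A B keepV newV newlab keepE newE nup nlo phi img :
 replaced A B keepV newV newlab keepE newE nup nlo ->
 (forall v, v \notin newV -> phi v = v) ->
 (forall v, v \in newV -> phi v \in fV A /\ newlab v <> Int /\ newlab v <> Cut) ->
 (forall e, e \notin newE -> img e = [:: e]) ->
 (forall e, e \in newE -> img e <> [::] /\ uniq (img e) /\
     (forall x, x \in img e -> x \in fE A /\ ~~ keepE x)) ->
 (forall e e', e \in newE -> e' \in newE -> e <> e' -> forall x, x \in img e -> x \notin img e') ->
 (forall e, e \in fE B -> walk A (nmap phi (nup e)) (img e) (nmap phi (nlo e))) ->
 cycle_free A -> cycle_free B.
Proof.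
move=> [uV [uE [unV [unE [fV' [fE' [mV [mE [lB eB]]]]]]]]] Hphi Hnew Hi Hin Hdn Hw.
apply: (cycle_map (phi:=phi) (img:=img)).
- move=> e He; have [Hu Hl] := eB e He; rewrite Hu Hl; split; [|split; [|exact: Hw]].
  + by case: (boolP (e \in newE)) => [/Hin []//|/Hi ->].
  + by case: (boolP (e \in newE)) => [/Hin [_ []]//|/Hi ->].
- move=> e e' He He' Hne x.
  case: (boolP (e \in newE)) => [Hn|Hn]; case: (boolP (e' \in newE)) => [Hn'|Hn'].
  + exact: Hdn.
  + rewrite (Hi _ Hn') inE => Hx; apply/negP => /eqP E; subst x.
    have [_ Hk] := proj2 (proj2 (Hin e Hn)) e' Hx.
    move: He' => /mE [/andP [_ Hk']|]; [by rewrite Hk' in Hk| by rewrite (negbTE Hn')].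
  + rewrite (Hi _ Hn) inE => /eqP ->; apply/negP => Hx.
    have [_ Hk] := proj2 (proj2 (Hin e' Hn')) e Hx.
    move: He => /mE [/andP [_ Hk']|]; [by rewrite Hk' in Hk| by rewrite (negbTE Hn)].
  + by rewrite (Hi _ Hn) (Hi _ Hn') !inE => /eqP -> ; apply/negP => /eqP.
- move=> z Hz Hl; rewrite (lB _ Hz) in Hl.
  case: (boolP (z \in newV)) Hl => [Hn|Hn] Hl.
    by have [_ [H1 H2]] := Hnew _ Hn; case: Hl.
  rewrite Hphi //; split => //.
  by move: Hz => /mV [/andP []//|]; rewrite (negbTE Hn).
- move=> v Hv; case: (boolP (v \in newV)) => [Hn|Hn]; first by case: (Hnew _ Hn).
  by rewrite Hphi //; move: Hv => /mV [/andP []//|]; rewrite (negbTE Hn).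
Qed.

Definition good (F : flow) :=
  uniq (fE F) /\
  (forall e, e \in fE F -> forall v, (up F e = Vx v -> v \in fV F) /\ (lo F e = Vx v -> v \in fV F)) /\
  (forall v, v \in fV F -> count (fun e => lo F e == Vx v) (fE F) = nupper (lab F v) /\
     count (fun e => up F e == Vx v) (fE F) = nlower (lab F v)).

Lemma flow_good F : is_flow F -> good F.
Proof.
move=> [_ [uE [Hend [Hc _]]]]; split => //; split => // e He v.
by have [_ [_ [H1 H2]]] := Hend e He; split; [exact: H1|exact: H2].
Qed.

Lemma perm_cnt (p : pred nat) (s1 s2 : seq nat) : perm_eq s1 s2 -> count p s1 = count p s2.
Proof. by move/permP => H; exact: H p. Qed.

Lemma count_split (p keep : pred nat) s :
  count p s = count (fun e => p e && keep e) s + count (fun e => p e && ~~ keep e) s.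
Proof. by elim: s => //= x s ->; case: (p x); case: (keep x) => //=; rewrite addnS. Qed.

Lemma cntA (p keep : pred nat) s r : uniq s -> uniq r ->
  (forall e, (e \in s) && ~~ keep e = (e \in r)) ->
  count p s = count (fun e => p e && keep e) s + count p r.
Proof.
move=> us ur Hm; rewrite (count_split p keep); congr (_ + _).
have -> : count (fun e => p e && ~~ keep e) s = count p (filter (predC keep) s)
  by rewrite count_filter.
apply/perm_cnt/uniq_perm; rewrite ?filter_uniq // => x.
by rewrite mem_filter andbC -Hm.
Qed.

Lemma cnt_only (p : pred nat) s r : uniq s -> uniq r ->
  (forall e, (e \in s) && p e = (e \in r)) -> count p s = size r.
Proof.
move=> us ur Hm; rewrite -size_filter; apply/perm_size/uniq_perm; rewrite ?filter_uniq // => x.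
by rewrite mem_filter andbC Hm.
Qed.

Lemma cntB A B keepV newV newlab keepE newE nup nlo (p q : pred nat) :
 replaced A B keepV newV newlab keepE newE nup nlo ->
 uniq (fE A) -> {in fE B, p =1 q} ->
 count p (fE B) = count (fun e => q e && keepE e) (fE A) + count q newE.
Proof.
move=> [uV [uE [unV [unE [fV' [fE' [mV [mE [lB eB]]]]]]]]] uA Hpq.
rewrite (eq_in_count Hpq) -count_filter -count_cat; apply/perm_cnt/uniq_perm => //.
  rewrite cat_uniq filter_uniq ?unE ?andbT //.
  apply/hasPn => x /fE' Hx; rewrite mem_filter; apply/negP => /andP [_ Hx'].
  by rewrite Hx' in Hx.
move=> x; rewrite mem_cat mem_filter andbC; apply/idP/idP.
  by move=> /mE [->|->]; rewrite ?orbT.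
by move=> /orP H; apply/mE; case: H => ->; [left|right].
Qed.

Lemma inc0 (p : pred nat) s x : count p s = 0 -> x \in s -> ~~ p x.
Proof.
move=> Hc Hx; apply/negP => Hp.
have : has p s by apply/hasP; exists x.
by rewrite has_count Hc.
Qed.

Lemma inc1 (p : pred nat) s a x : uniq s -> count p s = 1 -> a \in s -> p a ->
  x \in s -> p x -> x = a.
Proof.
move=> us Hc Ha Hpa Hx Hpx; case: (x =P a) => // Hne.
have : size [:: x; a] <= count p s.
  rewrite -size_filter; apply: uniq_leq_size; first by rewrite /= inE andbT; apply/eqP.
  by move=> z; rewrite !inE mem_filter => /orP [/eqP->|/eqP->]; apply/andP.
by rewrite Hc.
Qed.

Lemma inc2 (p : pred nat) s a b x : uniq s -> count p s = 2 -> a \in s -> p a ->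
  b \in s -> p b -> a <> b -> x \in s -> p x -> x = a \/ x = b.
Proof.
move=> us Hc Ha Hpa Hb Hpb Hab Hx Hpx; case: (x =P a) => [|Hna]; first by left.
case: (x =P b) => [|Hnb]; first by right.
have : size [:: x; a; b] <= count p s.
  rewrite -size_filter; apply: uniq_leq_size.
    by rewrite /= !inE negb_or andbT; apply/andP; split; [apply/andP; split|]; apply/eqP.
  by move=> z; rewrite !inE mem_filter => /orP [/eqP->|/orP [/eqP->|/eqP->]]; apply/andP.
by rewrite Hc.
Qed.

Lemma noloop A e v : cycle_free A -> e \in fE A -> up A e = Vx v -> v \in fV A -> lo A e <> Vx v.
Proof.
move=> H He Hu Hv Hl; apply: H; exists v, [:: e]; split => //; split => //.
by apply: AIpath; left; split.
Qed.

Lemma cnt_trans A B keepV newV newlab keepE newE nup nlo (pB qN qA : pred nat) RE :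
  replaced A B keepV newV newlab keepE newE nup nlo -> uniq (fE A) -> uniq RE ->
  (forall e, (e \in fE A) && ~~ keepE e = (e \in RE)) ->
  {in fE B, pB =1 qN} -> (forall e, e \in fE A -> keepE e -> qN e = qA e) ->
  count qN newE = count qA RE ->
  count pB (fE B) = count qA (fE A).
Proof.
move=> Hr uA uR HR Hpq Hq Hc.
rewrite (cntB Hr uA Hpq) (cntA qA uA uR HR) Hc; congr (_ + _).
apply: eq_in_count => e He /=; case: (boolP (keepE e)) => Hk; rewrite ?andbT ?andbF //.
exact: Hq.
Qed.

Lemma nodeE a b : (Vx a == Vx b) = (a == b).
Proof. by []. Qed.

Lemma nfix (phi : nat -> nat) (F : flow) x :
  (forall v, x = Vx v -> v \in fV F) -> (forall v, v \in fV F -> phi v = v) -> nmap phi x = x.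
Proof. by case: x => //= v H1 H2; rewrite H2 // H1. Qed.

Lemma rule1 A B w c e1 e2 e3 f :
  isv A w Wk -> isv A c Ctr -> e1 \in fE A -> e2 \in fE A -> e3 \in fE A ->
  up A e1 = Vx w -> lo A e1 = Vx c -> lo A e2 = Vx c -> e2 <> e1 -> up A e3 = Vx c ->
  replaced A B (predC (pred2 w c)) [::] (fun _ => Wk)
           (predC [pred e | (e == e1) || (e == e2) || (e == e3)]) [:: f]
           (fun e => if e == f then up A e2 else up A e)
           (fun e => if e == f then lo A e3 else lo A e) ->
  good A -> cycle_free A -> good B /\ cycle_free B.
Proof.
move=> [wV wL] [cV cL] E1 E2 E3 U1 L1 L2 N21 U3 Hr [uA [endA cA]] cf.
have Hr' := Hr; move: Hr' => [uV [uE [unV [unE [fV' [fE' [mV [mE [lB eB]]]]]]]]].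
have wc : w <> c by move=> E; subst; rewrite wL in cL.
have [cwl cwu] := cA w wV; rewrite wL /= in cwl cwu.
have [ccl ccu] := cA c cV; rewrite cL /= in ccl ccu.
have fA : f \notin fE A by apply: fE'; rewrite inE.
have upw : forall e, e \in fE A -> up A e = Vx w -> e = e1.
  by move=> e He Hu; apply: (inc1 uA cwu E1) => //=; rewrite ?U1 ?Hu.
have low : forall e, e \in fE A -> lo A e <> Vx w.
  by move=> e He Hl; have := inc0 cwl He; rewrite /= Hl eqxx.
have upc : forall e, e \in fE A -> up A e = Vx c -> e = e3.
  by move=> e He Hu; apply: (inc1 uA ccu E3) => //=; rewrite ?U3 ?Hu.
have loc : forall e, e \in fE A -> lo A e = Vx c -> e = e1 \/ e = e2.
  move=> e He Hl; apply: (inc2 uA ccl E1 _ E2) => //=; rewrite ?L1 ?L2 ?Hl //.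
  by move=> E; apply: N21.
have e23 : e2 <> e3 by move=> E; apply: (noloop cf E3 U3 cV); rewrite -E.
have e13 : e1 <> e3 by move=> E; apply: wc; move: U1; rewrite E U3 => [[]].
have nf : forall e, e \in fE A -> (e == f) = false.
  by move=> e He; apply/eqP => E; subst; rewrite He in fA.
have HRE : forall e, (e \in fE A) && ~~ predC [pred e | (e == e1) || (e == e2) || (e == e3)] e
                     = (e \in [:: e1; e2; e3]).
  move=> e; rewrite /= negbK !inE -!orbA; apply/idP/idP; first by case/andP.
  by move=> H; rewrite H andbT; case/or3P: H => /eqP->.
have uRE : uniq [:: e1; e2; e3].
  rewrite /= !inE !negb_or !andbT; apply/andP; split; [apply/andP; split|]; apply/eqP => //.
  by move=> E; apply: N21.
split; last first.
  apply: (step_cf (phi := id) (img := fun e => if e == f then [:: e2; e3] else [:: e]) Hr) => //.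
  - by move=> e; rewrite inE => /negbTE ->.
  - move=> e; rewrite inE => /eqP ->; rewrite eqxx; split => //; split.
      by rewrite /= inE andbT; apply/eqP.
    by move=> x; rewrite !inE => /orP [/eqP->|/eqP->]; split; rewrite //= negbK !eqxx ?orbT.
  - by move=> e e'; rewrite !inE => /eqP -> /eqP ->.
  - move=> e He; case: (boolP (e == f)) => [/eqP E|Hn].
    + subst e; have nmid : forall x, nmap id x = x by case.
      by rewrite !nmid; split => //; split => //; rewrite L2 -U3; split.
    + have HeA : e \in fE A by move: He => /mE [/andP []//|]; rewrite inE (negbTE Hn).
      have nmid : forall x, nmap id x = x by case.
      by rewrite !nmid.
split => //; split.
- move=> e He v; have [Hu Hl] := eB e He; rewrite Hu Hl.
  move: He => /mE [/andP [HeA Hk]|Hf].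
  + rewrite nf //; move: Hk; rewrite /= !negb_or => /andP [/andP [k1 k2] k3].
    have [H1 H2] := endA e HeA v; split => H; apply/mV; left; apply/andP; split.
    * exact: H1.
    * rewrite /= negb_or; apply/andP; split; apply/eqP => E; subst v.
        by move: k1; rewrite (upw e HeA H) eqxx.
      by move: k3; rewrite (upc e HeA H) eqxx.
    * exact: H2.
    * rewrite /= negb_or; apply/andP; split; apply/eqP => E; subst v; first exact: low HeA H.
      by case: (loc e HeA H) => E; move: k1 k2; rewrite E eqxx // orbT.
  + move: Hf; rewrite inE => /eqP ->; rewrite eqxx; split => H; apply/mV; left; apply/andP; split.
    * exact: (proj1 (endA e2 E2 v)).
    * rewrite /= negb_or; apply/andP; split; apply/eqP => E; subst v.
        exact: N21 (upw e2 E2 H).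
      exact: noloop cf E2 H cV L2.
    * exact: (proj2 (endA e3 E3 v)).
    * rewrite /= negb_or; apply/andP; split; apply/eqP => E; subst v; first exact: low E3 H.
      exact: noloop cf E3 U3 cV H.
- move=> v Hv; have HvA : (v \in fV A) && predC (pred2 w c) v.
    by move: Hv => /mV [//|]; rewrite inE.
  move: HvA => /andP [HvA Hk]; move: Hk; rewrite /= negb_or => /andP [/eqP vw /eqP vc].
  rewrite (lB _ Hv) ?inE /=; have [H1 H2] := cA v HvA; rewrite -H1 -H2; split.
  + apply: (cnt_trans (qN := fun e => (if e == f then lo A e3 else lo A e) == Vx v) Hr uA uRE HRE).
    * by move=> e He /=; rewrite (proj2 (eB e He)).
    * by move=> e He _ /=; rewrite nf.
    * rewrite /= eqxx L1 L2 !nodeE; have -> : (c == v) = false by apply/eqP => E; apply: vc.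
      by [].
  + apply: (cnt_trans (qN := fun e => (if e == f then up A e2 else up A e) == Vx v) Hr uA uRE HRE).
    * by move=> e He /=; rewrite (proj1 (eB e He)).
    * by move=> e He _ /=; rewrite nf.
    * rewrite /= eqxx U1 U3 !nodeE.
      have -> : (c == v) = false by apply/eqP => E; apply: vc.
      have -> : (w == v) = false by apply/eqP => E; apply: vw.
      by rewrite addn0 add0n.
Qed.

Lemma rule2 A B cw cc e1 e0 e2 f :
  isv A cw Cowk -> isv A cc Coctr -> e1 \in fE A -> e0 \in fE A -> e2 \in fE A ->
  up A e1 = Vx cc -> lo A e1 = Vx cw -> lo A e0 = Vx cc -> up A e2 = Vx cc -> e2 <> e1 ->
  replaced A B (predC (pred2 cw cc)) [::] (fun _ => Wk)
           (predC [pred e | (e == e0) || (e == e1) || (e == e2)]) [:: f]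
           (fun e => if e == f then up A e0 else up A e)
           (fun e => if e == f then lo A e2 else lo A e) ->
  good A -> cycle_free A -> good B /\ cycle_free B.
Proof.
move=> [wV wL] [cV cL] E1 E0 E2 U1 L1 L0 U2 N21 Hr [uA [endA cA]] cf.
have Hr' := Hr; move: Hr' => [uV [uE [unV [unE [fV' [fE' [mV [mE [lB eB]]]]]]]]].
have wc : cw <> cc by move=> E; subst; rewrite wL in cL.
have [cwl cwu] := cA cw wV; rewrite wL /= in cwl cwu.
have [ccl ccu] := cA cc cV; rewrite cL /= in ccl ccu.
have fA : f \notin fE A by apply: fE'; rewrite inE.
have low : forall e, e \in fE A -> lo A e = Vx cw -> e = e1.
  by move=> e He Hu; apply: (inc1 uA cwl E1) => //=; rewrite ?L1 ?Hu.
have upw : forall e, e \in fE A -> up A e <> Vx cw.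
  by move=> e He Hl; have := inc0 cwu He; rewrite /= Hl eqxx.
have loc : forall e, e \in fE A -> lo A e = Vx cc -> e = e0.
  by move=> e He Hu; apply: (inc1 uA ccl E0) => //=; rewrite ?L0 ?Hu.
have upc : forall e, e \in fE A -> up A e = Vx cc -> e = e1 \/ e = e2.
  move=> e He Hl; apply: (inc2 uA ccu E1 _ E2) => //=; rewrite ?U1 ?U2 ?Hl //.
  by move=> E; apply: N21.
have e02 : e0 <> e2 by move=> E; apply: (noloop cf E2 U2 cV); rewrite -E.
have e01 : e0 <> e1 by move=> E; apply: wc; move: L1; rewrite -E L0 => [[]].
have nf : forall e, e \in fE A -> (e == f) = false.
  by move=> e He; apply/eqP => E; subst; rewrite He in fA.
have HRE : forall e, (e \in fE A) && ~~ predC [pred e | (e == e0) || (e == e1) || (e == e2)] e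
                     = (e \in [:: e0; e1; e2]).
  move=> e; rewrite /= negbK !inE -!orbA; apply/idP/idP; first by case/andP.
  by move=> H; rewrite H andbT; case/or3P: H => /eqP->.
have uRE : uniq [:: e0; e1; e2].
  rewrite /= !inE !negb_or !andbT; apply/andP; split; [apply/andP; split|]; apply/eqP => //.
  by move=> E; apply: N21.
split; last first.
  apply: (step_cf (phi := id) (img := fun e => if e == f then [:: e0; e2] else [:: e]) Hr) => //.
  - by move=> e; rewrite inE => /negbTE ->.
  - move=> e; rewrite inE => /eqP ->; rewrite eqxx; split => //; split.
      by rewrite /= inE andbT; apply/eqP.
    by move=> x; rewrite !inE => /orP [/eqP->|/eqP->]; split; rewrite //= negbK !eqxx ?orbT.
  - by move=> e e'; rewrite !inE => /eqP -> /eqP ->.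
  - move=> e He; case: (boolP (e == f)) => [/eqP E|Hn].
    + subst e; have nmid : forall x, nmap id x = x by case.
      by rewrite !nmid; split => //; split => //; rewrite L0 -U2; split.
    + have HeA : e \in fE A by move: He => /mE [/andP []//|]; rewrite inE (negbTE Hn).
      have nmid : forall x, nmap id x = x by case.
      by rewrite !nmid.
split => //; split.
- move=> e He v; have [Hu Hl] := eB e He; rewrite Hu Hl.
  move: He => /mE [/andP [HeA Hk]|Hf].
  + rewrite nf //; move: Hk; rewrite /= !negb_or => /andP [/andP [k0 k1] k2].
    have [H1 H2] := endA e HeA v; split => H; apply/mV; left; apply/andP; split.
    * exact: H1.
    * rewrite /= negb_or; apply/andP; split; apply/eqP => E; subst v; first exact: upw HeA H.
      by case: (upc e HeA H) => E; move: k1 k2; rewrite E eqxx // orbT.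
    * exact: H2.
    * rewrite /= negb_or; apply/andP; split; apply/eqP => E; subst v.
        by move: k1; rewrite (low e HeA H) eqxx.
      by move: k0; rewrite (loc e HeA H) eqxx.
  + move: Hf; rewrite inE => /eqP ->; rewrite eqxx; split => H; apply/mV; left; apply/andP; split.
    * exact: (proj1 (endA e0 E0 v)).
    * rewrite /= negb_or; apply/andP; split; apply/eqP => E; subst v; first exact: upw E0 H.
      exact: noloop cf E0 H cV L0.
    * exact: (proj2 (endA e2 E2 v)).
    * rewrite /= negb_or; apply/andP; split; apply/eqP => E; subst v.
        exact: N21 (low e2 E2 H).
      exact: noloop cf E2 U2 cV H.
- move=> v Hv; have HvA : (v \in fV A) && predC (pred2 cw cc) v.
    by move: Hv => /mV [//|]; rewrite inE.
  move: HvA => /andP [HvA Hk]; move: Hk; rewrite /= negb_or => /andP [/eqP vw /eqP vc].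
  rewrite (lB _ Hv) ?inE /=; have [H1 H2] := cA v HvA; rewrite -H1 -H2; split.
  + apply: (cnt_trans (qN := fun e => (if e == f then lo A e2 else lo A e) == Vx v) Hr uA uRE HRE).
    * by move=> e He /=; rewrite (proj2 (eB e He)).
    * by move=> e He _ /=; rewrite nf.
    * rewrite /= eqxx L1 L0 !nodeE.
      have -> : (cc == v) = false by apply/eqP => E; apply: vc.
      have -> : (cw == v) = false by apply/eqP => E; apply: vw.
      by [].
  + apply: (cnt_trans (qN := fun e => (if e == f then up A e0 else up A e) == Vx v) Hr uA uRE HRE).
    * by move=> e He /=; rewrite (proj1 (eB e He)).
    * by move=> e He _ /=; rewrite nf.
    * rewrite /= eqxx U1 U2 !nodeE.
      have -> : (cc == v) = false by apply/eqP => E; apply: vc.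
      by rewrite !addn0.
Qed.

Lemma rule3 A B w k e1 e2 u :
  isv A w Wk -> isv A k Cut -> e1 \in fE A -> e2 \in fE A ->
  up A e1 = Vx w -> lo A e1 = Vx k -> lo A e2 = Vx k -> e2 <> e1 ->
  replaced A B (predC (pred2 w k)) [:: u] (fun _ => Cowk)
           (predC (pred1 e1)) [::]
           (up A)
           (fun e => if e == e2 then Vx u else lo A e) ->
  good A -> cycle_free A -> good B /\ cycle_free B.
Proof.
move=> [wV wL] [kV kL] E1 E2 U1 L1 L2 N21 Hr [uA [endA cA]] cf.
have Hr' := Hr; move: Hr' => [uV [uE [unV [unE [fV' [fE' [mV [mE [lB eB]]]]]]]]].
have wk : w <> k by move=> E; subst; rewrite wL in kL.
have [cwl cwu] := cA w wV; rewrite wL /= in cwl cwu.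
have [ckl cku] := cA k kV; rewrite kL /= in ckl cku.
have uA' : u \notin fV A by apply: fV'; rewrite inE.
have nu : forall v, v \in fV A -> (v == u) = false.
  by move=> v Hv; apply/eqP => E; subst; rewrite Hv in uA'.
have upw : forall e, e \in fE A -> up A e = Vx w -> e = e1.
  by move=> e He Hu; apply: (inc1 uA cwu E1) => //=; rewrite ?U1 ?Hu.
have low : forall e, e \in fE A -> lo A e <> Vx w.
  by move=> e He Hl; have := inc0 cwl He; rewrite /= Hl eqxx.
have upk : forall e, e \in fE A -> up A e <> Vx k.
  by move=> e He Hl; have := inc0 cku He; rewrite /= Hl eqxx.
have lok : forall e, e \in fE A -> lo A e = Vx k -> e = e1 \/ e = e2.
  move=> e He Hl; apply: (inc2 uA ckl E1 _ E2) => //=; rewrite ?L1 ?L2 ?Hl //.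
  by move=> E; apply: N21.
have HeB : forall e, e \in fE B -> (e \in fE A) && (e != e1).
  by move=> e /mE [//|].
have HRE : forall e, (e \in fE A) && ~~ predC (pred1 e1) e = (e \in [:: e1]).
  move=> e; rewrite /= negbK !inE; apply/idP/idP; first by case/andP.
  by move=> H; rewrite H andbT; move/eqP: H => ->.
have uRE : uniq [:: e1] by [].
split; last first.
  apply: (step_cf (phi := fun x => if x == u then k else x) (img := fun e => [:: e]) Hr) => //.
  - by move=> v; rewrite inE => /negbTE ->.
  - by move=> v; rewrite inE => /eqP ->; rewrite eqxx.
  - move=> e He; have /andP [HeA Hk] := HeB e He.
    have fx : forall x, (forall v, x = Vx v -> v \in fV A) ->
        nmap (fun x => if x == u then k else x) x = x.
      by move=> x Hx; apply: (nfix Hx) => v Hv; rewrite nu.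
    rewrite /= fx; last by move=> v Hv; apply: (proj1 (endA e HeA v)).
    split => //; split => //.
    case: (boolP (e == e2)) => [/eqP ->|Hn] /=; first by rewrite eqxx L2.
    by rewrite fx // => v Hv; apply: (proj2 (endA e HeA v)).
split => //; split.
- move=> e He v; have [Hu Hl] := eB e He; rewrite Hu Hl.
  have /andP [HeA k1] := HeB e He.
  have [H1 H2] := endA e HeA v; split => H.
  + apply/mV; left; apply/andP; split; first exact: H1.
    rewrite /= negb_or; apply/andP; split; apply/eqP => E; subst v.
      by move: k1; rewrite (upw e HeA H) eqxx.
    exact: upk HeA H.
  + move: H; case: (boolP (e == e2)) => [_ [<-]|Hn H]; first by apply/mV; right; rewrite inE.
    apply/mV; left; apply/andP; split; first exact: H2.
    rewrite /= negb_or; apply/andP; split; apply/eqP => E; subst v; first exact: low HeA H.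
    by case: (lok e HeA H) => E; move: k1 Hn; rewrite E eqxx.
- move=> v Hv; move: (Hv) => /mV [/andP [HvA Hk]|Hvu].
  + move: Hk; rewrite /= negb_or => /andP [/eqP vw /eqP vk].
    rewrite (lB _ Hv) inE nu //; have [H1 H2] := cA v HvA; rewrite -H1 -H2; split.
    * apply: (cnt_trans (qN := fun e => (if e == e2 then Vx u else lo A e) == Vx v) Hr uA uRE HRE).
      - by move=> e He /=; rewrite (proj2 (eB e He)).
      - move=> e He _ /=; case: (boolP (e == e2)) => [/eqP ->|//].
        by rewrite L2 !nodeE eq_sym nu // eq_sym; apply/esym/eqP => E; apply: vk.
      - by rewrite /= L1 nodeE; have -> : (k == v) = false by apply/eqP => E; apply: vk.
    * apply: (cnt_trans (qN := fun e => up A e == Vx v) Hr uA uRE HRE).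
      - by move=> e He /=; rewrite (proj1 (eB e He)).
      - by [].
      - by rewrite /= U1 nodeE; have -> : (w == v) = false by apply/eqP => E; apply: vw.
  + move: Hvu Hv; rewrite inE => /eqP -> Hv; rewrite (lB _ Hv) inE eqxx /=; split.
    * rewrite (cntB (q := fun e => (if e == e2 then Vx u else lo A e) == Vx u) Hr uA) /=;
        last by move=> e He /=; rewrite (proj2 (eB e He)).
      rewrite addn0 (@cnt_only _ _ [:: e2]) // => e.
      rewrite inE; case: (boolP (e == e2)) => [/eqP ->|Hn]; first by rewrite E2 eqxx /=; apply/eqP.
      apply/negbTE; apply/negP => /andP [HeA /andP [/eqP Hl _]].
      by have := proj2 (endA e HeA u) Hl; rewrite (negbTE uA').
    * rewrite (cntB (q := fun e => up A e == Vx u) Hr uA) /=;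
        last by move=> e He /=; rewrite (proj1 (eB e He)).
      rewrite addn0 (@cnt_only _ _ [::]) // => e.
      apply/negbTE; apply/negP => /andP [HeA /andP [/eqP Hl _]].
      by have := proj1 (endA e HeA u) Hl; rewrite (negbTE uA').
Qed.

Lemma rule4 A B i cw e1 e2 u :
  isv A i Int -> isv A cw Cowk -> e1 \in fE A -> e2 \in fE A ->
  up A e1 = Vx i -> lo A e1 = Vx cw -> up A e2 = Vx i -> e2 <> e1 ->
  replaced A B (predC (pred2 i cw)) [:: u] (fun _ => Wk)
           (predC (pred1 e1)) [::]
           (fun e => if e == e2 then Vx u else up A e)
           (lo A) ->
  good A -> cycle_free A -> good B /\ cycle_free B.
Proof.
move=> [kV kL] [wV wL] E1 E2 U1 L1 U2 N21 Hr [uA [endA cA]] cf.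
have Hr' := Hr; move: Hr' => [uV [uE [unV [unE [fV' [fE' [mV [mE [lB eB]]]]]]]]].
have wk : cw <> i by move=> E; subst; rewrite wL in kL.
have [cwl cwu] := cA cw wV; rewrite wL /= in cwl cwu.
have [ckl cku] := cA i kV; rewrite kL /= in ckl cku.
have uA' : u \notin fV A by apply: fV'; rewrite inE.
have nu : forall v, v \in fV A -> (v == u) = false.
  by move=> v Hv; apply/eqP => E; subst; rewrite Hv in uA'.
have low : forall e, e \in fE A -> lo A e = Vx cw -> e = e1.
  by move=> e He Hu; apply: (inc1 uA cwl E1) => //=; rewrite ?L1 ?Hu.
have upw : forall e, e \in fE A -> up A e <> Vx cw.
  by move=> e He Hl; have := inc0 cwu He; rewrite /= Hl eqxx.
have lok : forall e, e \in fE A -> lo A e <> Vx i.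
  by move=> e He Hl; have := inc0 ckl He; rewrite /= Hl eqxx.
have upk : forall e, e \in fE A -> up A e = Vx i -> e = e1 \/ e = e2.
  move=> e He Hl; apply: (inc2 uA cku E1 _ E2) => //=; rewrite ?U1 ?U2 ?Hl //.
  by move=> E; apply: N21.
have HeB : forall e, e \in fE B -> (e \in fE A) && (e != e1).
  by move=> e /mE [//|].
have HRE : forall e, (e \in fE A) && ~~ predC (pred1 e1) e = (e \in [:: e1]).
  move=> e; rewrite /= negbK !inE; apply/idP/idP; first by case/andP.
  by move=> H; rewrite H andbT; move/eqP: H => ->.
have uRE : uniq [:: e1] by [].
split; last first.
  apply: (step_cf (phi := fun x => if x == u then i else x) (img := fun e => [:: e]) Hr) => //.
  - by move=> v; rewrite inE => /negbTE ->.
  - by move=> v; rewrite inE => /eqP ->; rewrite eqxx.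
  - move=> e He; have /andP [HeA Hk] := HeB e He.
    have fx : forall x, (forall v, x = Vx v -> v \in fV A) ->
        nmap (fun x => if x == u then i else x) x = x.
      by move=> x Hx; apply: (nfix Hx) => v Hv; rewrite nu.
    rewrite /= (fx (lo A e)); last by move=> v Hv; apply: (proj2 (endA e HeA v)).
    split => //; split => //.
    case: (boolP (e == e2)) => [/eqP ->|Hn] /=; first by rewrite eqxx U2.
    by rewrite fx // => v Hv; apply: (proj1 (endA e HeA v)).
split => //; split.
- move=> e He v; have [Hu Hl] := eB e He; rewrite Hu Hl.
  have /andP [HeA k1] := HeB e He.
  have [H1 H2] := endA e HeA v; split => H.
  + move: H; case: (boolP (e == e2)) => [_ [<-]|Hn H]; first by apply/mV; right; rewrite inE.
    apply/mV; left; apply/andP; split; first exact: H1.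
    rewrite /= negb_or; apply/andP; split; apply/eqP => E; subst v.
      by case: (upk e HeA H) => E; move: k1 Hn; rewrite E eqxx.
    exact: upw HeA H.
  + apply/mV; left; apply/andP; split; first exact: H2.
    rewrite /= negb_or; apply/andP; split; apply/eqP => E; subst v; first exact: lok HeA H.
    by move: k1; rewrite (low e HeA H) eqxx.
- move=> v Hv; move: (Hv) => /mV [/andP [HvA Hk]|Hvu].
  + move: Hk; rewrite /= negb_or => /andP [/eqP vk /eqP vw].
    rewrite (lB _ Hv) inE nu //; have [H1 H2] := cA v HvA; rewrite -H1 -H2; split.
    * apply: (cnt_trans (qN := fun e => lo A e == Vx v) Hr uA uRE HRE).
      - by move=> e He /=; rewrite (proj2 (eB e He)).
      - by [].
      - by rewrite /= L1 nodeE; have -> : (cw == v) = false by apply/eqP => E; apply: vw.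
    * apply: (cnt_trans (qN := fun e => (if e == e2 then Vx u else up A e) == Vx v) Hr uA uRE HRE).
      - by move=> e He /=; rewrite (proj1 (eB e He)).
      - move=> e He _ /=; case: (boolP (e == e2)) => [/eqP ->|//].
        by rewrite U2 !nodeE eq_sym nu // eq_sym; apply/esym/eqP => E; apply: vk.
      - by rewrite /= U1 nodeE; have -> : (i == v) = false by apply/eqP => E; apply: vk.
  + move: Hvu Hv; rewrite inE => /eqP -> Hv; rewrite (lB _ Hv) inE eqxx /=; split.
    * rewrite (cntB (q := fun e => lo A e == Vx u) Hr uA) /=;
        last by move=> e He /=; rewrite (proj2 (eB e He)).
      rewrite addn0 (@cnt_only _ _ [::]) // => e.
      apply/negbTE; apply/negP => /andP [HeA /andP [/eqP Hl _]].
      by have := proj2 (endA e HeA u) Hl; rewrite (negbTE uA').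
    * rewrite (cntB (q := fun e => (if e == e2 then Vx u else up A e) == Vx u) Hr uA) /=;
        last by move=> e He /=; rewrite (proj1 (eB e He)).
      rewrite addn0 (@cnt_only _ _ [:: e2]) // => e.
      rewrite inE; case: (boolP (e == e2)) => [/eqP ->|Hn]; first by rewrite E2 eqxx /=; apply/eqP.
      apply/negbTE; apply/negP => /andP [HeA /andP [/eqP Hl _]].
      by have := proj1 (endA e HeA u) Hl; rewrite (negbTE uA').
Qed.

Lemma rule5 A B w cw e1 :
  isv A w Wk -> isv A cw Cowk -> e1 \in fE A -> up A e1 = Vx w -> lo A e1 = Vx cw ->
  replaced A B (predC (pred2 w cw)) [::] (fun _ => Wk)
           (predC (pred1 e1)) [::] (up A) (lo A) ->
  good A -> cycle_free A -> good B /\ cycle_free B.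
Proof.
move=> [wV wL] [kV kL] E1 U1 L1 Hr [uA [endA cA]] cf.
have Hr' := Hr; move: Hr' => [uV [uE [unV [unE [fV' [fE' [mV [mE [lB eB]]]]]]]]].
have [cwl cwu] := cA w wV; rewrite wL /= in cwl cwu.
have [ckl cku] := cA cw kV; rewrite kL /= in ckl cku.
have upw : forall e, e \in fE A -> up A e = Vx w -> e = e1.
  by move=> e He Hu; apply: (inc1 uA cwu E1) => //=; rewrite ?U1 ?Hu.
have low : forall e, e \in fE A -> lo A e <> Vx w.
  by move=> e He Hl; have := inc0 cwl He; rewrite /= Hl eqxx.
have upk : forall e, e \in fE A -> up A e <> Vx cw.
  by move=> e He Hl; have := inc0 cku He; rewrite /= Hl eqxx.
have lok : forall e, e \in fE A -> lo A e = Vx cw -> e = e1.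
  by move=> e He Hu; apply: (inc1 uA ckl E1) => //=; rewrite ?L1 ?Hu.
have HeB : forall e, e \in fE B -> (e \in fE A) && (e != e1).
  by move=> e /mE [//|].
have HRE : forall e, (e \in fE A) && ~~ predC (pred1 e1) e = (e \in [:: e1]).
  move=> e; rewrite /= negbK !inE; apply/idP/idP; first by case/andP.
  by move=> H; rewrite H andbT; move/eqP: H => ->.
have uRE : uniq [:: e1] by [].
have nmid : forall x, nmap id x = x by case.
split; last first.
  apply: (step_cf (phi := id) (img := fun e => [:: e]) Hr) => //.
  move=> e He; have /andP [HeA Hk] := HeB e He.
  by rewrite !nmid.
split => //; split.
- move=> e He v; have [Hu Hl] := eB e He; rewrite Hu Hl.
  have /andP [HeA k1] := HeB e He.
  have [H1 H2] := endA e HeA v; split => H.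
  + apply/mV; left; apply/andP; split; first exact: H1.
    rewrite /= negb_or; apply/andP; split; apply/eqP => E; subst v.
      by move: k1; rewrite (upw e HeA H) eqxx.
    exact: upk HeA H.
  + apply/mV; left; apply/andP; split; first exact: H2.
    rewrite /= negb_or; apply/andP; split; apply/eqP => E; subst v; first exact: low HeA H.
    by move: k1; rewrite (lok e HeA H) eqxx.
- move=> v Hv; have HvA : (v \in fV A) && predC (pred2 w cw) v.
    by move: Hv => /mV [//|]; rewrite inE.
  move: HvA => /andP [HvA Hk]; move: Hk; rewrite /= negb_or => /andP [/eqP vw /eqP vk].
  rewrite (lB _ Hv) ?inE /=; have [H1 H2] := cA v HvA; rewrite -H1 -H2; split.
  + apply: (cnt_trans (qN := fun e => lo A e == Vx v) Hr uA uRE HRE).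
    * by move=> e He /=; rewrite (proj2 (eB e He)).
    * by [].
    * by rewrite /= L1 nodeE; have -> : (cw == v) = false by apply/eqP => E; apply: vk.
  + apply: (cnt_trans (qN := fun e => up A e == Vx v) Hr uA uRE HRE).
    * by move=> e He /=; rewrite (proj1 (eB e He)).
    * by [].
    * by rewrite /= U1 nodeE; have -> : (w == v) = false by apply/eqP => E; apply: vw.
Qed.

Lemma rule6 A B w cc e0 e1 e2 u1 u2 :
  isv A w Wk -> isv A cc Coctr -> e0 \in fE A -> e1 \in fE A -> e2 \in fE A ->
  up A e0 = Vx w -> lo A e0 = Vx cc -> up A e1 = Vx cc -> up A e2 = Vx cc -> e1 <> e2 ->
  replaced A B (predC (pred2 w cc)) [:: u1; u2] (fun _ => Wk)
           (predC (pred1 e0)) [::]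
           (fun e => if e == e1 then Vx u1 else if e == e2 then Vx u2 else up A e)
           (lo A) ->
  good A -> cycle_free A -> good B /\ cycle_free B.
Proof.
move=> [wV wL] [kV kL] E0 E1 E2 U0 L0 U1 U2 N12 Hr [uA [endA cA]] cf.
have Hr' := Hr; move: Hr' => [uV [uE [unV [unE [fV' [fE' [mV [mE [lB eB]]]]]]]]].
have wk : w <> cc by move=> E; subst; rewrite wL in kL.
have [cwl cwu] := cA w wV; rewrite wL /= in cwl cwu.
have [ckl cku] := cA cc kV; rewrite kL /= in ckl cku.
have u1A : u1 \notin fV A by apply: fV'; rewrite !inE eqxx.
have u2A : u2 \notin fV A by apply: fV'; rewrite !inE eqxx orbT.
have u12 : (u1 == u2) = false by move: unV; rewrite /= inE andbT => /negbTE.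
have nu : forall v, v \in fV A -> (v == u1) = false /\ (v == u2) = false.
  by move=> v Hv; split; apply/eqP => E; subst; [rewrite Hv in u1A|rewrite Hv in u2A].
have upw : forall e, e \in fE A -> up A e = Vx w -> e = e0.
  by move=> e He Hu; apply: (inc1 uA cwu E0) => //=; rewrite ?U0 ?Hu.
have low : forall e, e \in fE A -> lo A e <> Vx w.
  by move=> e He Hl; have := inc0 cwl He; rewrite /= Hl eqxx.
have lok : forall e, e \in fE A -> lo A e = Vx cc -> e = e0.
  by move=> e He Hu; apply: (inc1 uA ckl E0) => //=; rewrite ?L0 ?Hu.
have upk : forall e, e \in fE A -> up A e = Vx cc -> e = e1 \/ e = e2.
  by move=> e He Hl; apply: (inc2 uA cku E1 _ E2) => //=; rewrite ?U1 ?U2 ?Hl.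
have e01 : (e1 == e0) = false by apply/eqP => E; apply: wk; move: U0; rewrite -E U1 => [[]].
have e02 : (e2 == e0) = false by apply/eqP => E; apply: wk; move: U0; rewrite -E U2 => [[]].
have n12 : (e2 == e1) = false by apply/eqP => E; apply: N12.
have HeB : forall e, e \in fE B -> (e \in fE A) && (e != e0).
  by move=> e /mE [//|].
have HRE : forall e, (e \in fE A) && ~~ predC (pred1 e0) e = (e \in [:: e0]).
  move=> e; rewrite /= negbK !inE; apply/idP/idP; first by case/andP.
  by move=> H; rewrite H andbT; move/eqP: H => ->.
have uRE : uniq [:: e0] by [].
set phi := fun x => if x == u1 then cc else if x == u2 then cc else x.
have fx : forall x, (forall v, x = Vx v -> v \in fV A) -> nmap phi x = x.
  by move=> x Hx; apply: (nfix Hx) => v Hv; rewrite /phi (proj1 (nu v Hv)) (proj2 (nu v Hv)).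
split; last first.
  apply: (step_cf (phi := phi) (img := fun e => [:: e]) Hr) => //.
  - by move=> v; rewrite !inE negb_or => /andP [/negbTE H1 /negbTE H2]; rewrite /phi H1 H2.
  - move=> v; rewrite !inE => /orP [/eqP ->|/eqP ->]; rewrite /phi /= ?eqxx; [|case: ifP => _; rewrite ?eqxx]; by split.
  - move=> e He; have /andP [HeA Hk] := HeB e He.
    rewrite /= (fx (lo A e)); last by move=> v Hv; apply: (proj2 (endA e HeA v)).
    split => //; split => //.
    case: (boolP (e == e1)) => [/eqP ->|Hn1] /=; first by rewrite /phi eqxx U1.
    case: (boolP (e == e2)) => [/eqP ->|Hn2] /=; first by rewrite /phi eqxx eq_sym u12 U2.
    by rewrite fx // => v Hv; apply: (proj1 (endA e HeA v)).
split => //; split.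
- move=> e He v; have [Hu Hl] := eB e He; rewrite Hu Hl.
  have /andP [HeA k1] := HeB e He.
  have [H1 H2] := endA e HeA v; split => H.
  + move: H; case: (boolP (e == e1)) => [_ [<-]|Hn1]; first by apply/mV; right; rewrite !inE eqxx.
    case: (boolP (e == e2)) => [_ [<-]|Hn2 H]; first by apply/mV; right; rewrite !inE eqxx orbT.
    apply/mV; left; apply/andP; split; first exact: H1.
    rewrite /= negb_or; apply/andP; split; apply/eqP => E; subst v.
      by move: k1; rewrite (upw e HeA H) eqxx.
    by case: (upk e HeA H) => E; move: Hn1 Hn2; rewrite E eqxx.
  + apply/mV; left; apply/andP; split; first exact: H2.
    rewrite /= negb_or; apply/andP; split; apply/eqP => E; subst v; first exact: low HeA H.
    by move: k1; rewrite (lok e HeA H) eqxx.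
- move=> v Hv; move: (Hv) => /mV [/andP [HvA Hk]|Hvu].
  + move: Hk; rewrite /= negb_or => /andP [/eqP vw /eqP vk].
    have [nu1 nu2] := nu v HvA.
    rewrite (lB _ Hv) !inE nu1 nu2 /=; have [H1 H2] := cA v HvA; rewrite -H1 -H2; split.
    * apply: (cnt_trans (qN := fun e => lo A e == Vx v) Hr uA uRE HRE).
      - by move=> e He /=; rewrite (proj2 (eB e He)).
      - by [].
      - by rewrite /= L0 nodeE; have -> : (cc == v) = false by apply/eqP => E; apply: vk.
    * apply: (cnt_trans (qN := fun e => (if e == e1 then Vx u1 else if e == e2 then Vx u2
                                            else up A e) == Vx v) Hr uA uRE HRE).
      - by move=> e He /=; rewrite (proj1 (eB e He)).
      - have ckv : (Vx cc == Vx v) = false by rewrite nodeE; apply/eqP => E; apply: vk.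
        move=> e He _ /=; case: (boolP (e == e1)) => [/eqP ->|_].
          by rewrite U1 ckv nodeE eq_sym nu1.
        case: (boolP (e == e2)) => [/eqP ->|//].
        by rewrite U2 ckv nodeE eq_sym nu2.
      - by rewrite /= U0 nodeE; have -> : (w == v) = false by apply/eqP => E; apply: vw.
  + have Hlab : lab B v = Wk by rewrite (lB _ Hv) Hvu.
    have vA : v \notin fV A by apply: fV'.
    rewrite Hlab /=; split.
    * rewrite (cntB (q := fun e => lo A e == Vx v) Hr uA) /=;
        last by move=> e He /=; rewrite (proj2 (eB e He)).
      rewrite addn0 (@cnt_only _ _ [::]) // => e.
      apply/negbTE; apply/negP => /andP [HeA /andP [/eqP Hl _]].
      by have := proj2 (endA e HeA v) Hl; rewrite (negbTE vA).
    * rewrite (cntB (q := fun e => (if e == e1 then Vx u1 else if e == e2 then Vx u2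
                                            else up A e) == Vx v) Hr uA) /=;
        last by move=> e He /=; rewrite (proj1 (eB e He)).
      move: Hvu; rewrite !inE => /orP [/eqP Ev|/eqP Ev]; subst v.
      - rewrite addn0 (@cnt_only _ _ [:: e1]) // => e.
        rewrite inE; case: (boolP (e == e1)) => [/eqP ->|Hn1]; first by rewrite E1 eqxx /= e01.
        case: (boolP (e == e2)) => [/eqP ->|Hn2]; first by rewrite nodeE eq_sym u12 andbF.
        apply/negbTE; apply/negP => /andP [HeA /andP [/eqP Hl _]].
        by have := proj1 (endA e HeA u1) Hl; rewrite (negbTE vA).
      - rewrite addn0 (@cnt_only _ _ [:: e2]) // => e.
        rewrite inE; case: (boolP (e == e1)) => [/eqP ->|Hn1]; first by rewrite nodeE u12 andbF eq_sym n12.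
        case: (boolP (e == e2)) => [/eqP ->|Hn2]; first by rewrite E2 eqxx /= e02.
        apply/negbTE; apply/negP => /andP [HeA /andP [/eqP Hl _]].
        by have := proj1 (endA e HeA u2) Hl; rewrite (negbTE vA).
Qed.

Lemma rule7 A B cw c e0 e1 e2 u1 u2 :
  isv A cw Cowk -> isv A c Ctr -> e0 \in fE A -> e1 \in fE A -> e2 \in fE A ->
  up A e0 = Vx c -> lo A e0 = Vx cw -> lo A e1 = Vx c -> lo A e2 = Vx c -> e1 <> e2 ->
  replaced A B (predC (pred2 cw c)) [:: u1; u2] (fun _ => Cowk)
           (predC (pred1 e0)) [::]
           (up A)
           (fun e => if e == e1 then Vx u1 else if e == e2 then Vx u2 else lo A e) ->
  good A -> cycle_free A -> good B /\ cycle_free B.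
Proof.
move=> [wV wL] [kV kL] E0 E1 E2 U0 L0 U1 U2 N12 Hr [uA [endA cA]] cf.
have Hr' := Hr; move: Hr' => [uV [uE [unV [unE [fV' [fE' [mV [mE [lB eB]]]]]]]]].
have wk : cw <> c by move=> E; subst; rewrite wL in kL.
have [cwl cwu] := cA cw wV; rewrite wL /= in cwl cwu.
have [ckl cku] := cA c kV; rewrite kL /= in ckl cku.
have u1A : u1 \notin fV A by apply: fV'; rewrite !inE eqxx.
have u2A : u2 \notin fV A by apply: fV'; rewrite !inE eqxx orbT.
have u12 : (u1 == u2) = false by move: unV; rewrite /= inE andbT => /negbTE.
have nu : forall v, v \in fV A -> (v == u1) = false /\ (v == u2) = false.
  by move=> v Hv; split; apply/eqP => E; subst; [rewrite Hv in u1A|rewrite Hv in u2A].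
have upw : forall e, e \in fE A -> lo A e = Vx cw -> e = e0.
  by move=> e He Hu; apply: (inc1 uA cwl E0) => //=; rewrite ?L0 ?Hu.
have low : forall e, e \in fE A -> up A e <> Vx cw.
  by move=> e He Hl; have := inc0 cwu He; rewrite /= Hl eqxx.
have lok : forall e, e \in fE A -> up A e = Vx c -> e = e0.
  by move=> e He Hu; apply: (inc1 uA cku E0) => //=; rewrite ?U0 ?Hu.
have upk : forall e, e \in fE A -> lo A e = Vx c -> e = e1 \/ e = e2.
  by move=> e He Hl; apply: (inc2 uA ckl E1 _ E2) => //=; rewrite ?U1 ?U2 ?Hl.
have e01 : (e1 == e0) = false by apply/eqP => E; apply: wk; move: L0; rewrite -E U1 => [[]].
have e02 : (e2 == e0) = false by apply/eqP => E; apply: wk; move: L0; rewrite -E U2 => [[]].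
have n12 : (e2 == e1) = false by apply/eqP => E; apply: N12.
have HeB : forall e, e \in fE B -> (e \in fE A) && (e != e0).
  by move=> e /mE [//|].
have HRE : forall e, (e \in fE A) && ~~ predC (pred1 e0) e = (e \in [:: e0]).
  move=> e; rewrite /= negbK !inE; apply/idP/idP; first by case/andP.
  by move=> H; rewrite H andbT; move/eqP: H => ->.
have uRE : uniq [:: e0] by [].
set phi := fun x => if x == u1 then c else if x == u2 then c else x.
have fx : forall x, (forall v, x = Vx v -> v \in fV A) -> nmap phi x = x.
  by move=> x Hx; apply: (nfix Hx) => v Hv; rewrite /phi (proj1 (nu v Hv)) (proj2 (nu v Hv)).
split; last first.
  apply: (step_cf (phi := phi) (img := fun e => [:: e]) Hr) => //.
  - by move=> v; rewrite !inE negb_or => /andP [/negbTE H1 /negbTE H2]; rewrite /phi H1 H2.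
  - move=> v; rewrite !inE => /orP [/eqP ->|/eqP ->]; rewrite /phi /= ?eqxx; [|case: ifP => _; rewrite ?eqxx]; by split.
  - move=> e He; have /andP [HeA Hk] := HeB e He.
    rewrite /= (fx (up A e)); last by move=> v Hv; apply: (proj1 (endA e HeA v)).
    split => //; split => //.
    case: (boolP (e == e1)) => [/eqP ->|Hn1] /=; first by rewrite /phi eqxx U1.
    case: (boolP (e == e2)) => [/eqP ->|Hn2] /=; first by rewrite /phi eqxx eq_sym u12 U2.
    by rewrite fx // => v Hv; apply: (proj2 (endA e HeA v)).
split => //; split.
- move=> e He v; have [Hu Hl] := eB e He; rewrite Hu Hl.
  have /andP [HeA k1] := HeB e He.
  have [H1 H2] := endA e HeA v; split => H.
  + apply/mV; left; apply/andP; split; first exact: H1.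
    rewrite /= negb_or; apply/andP; split; apply/eqP => E; subst v; first exact: low HeA H.
    by move: k1; rewrite (lok e HeA H) eqxx.
  + move: H; case: (boolP (e == e1)) => [_ [<-]|Hn1]; first by apply/mV; right; rewrite !inE eqxx.
    case: (boolP (e == e2)) => [_ [<-]|Hn2 H]; first by apply/mV; right; rewrite !inE eqxx orbT.
    apply/mV; left; apply/andP; split; first exact: H2.
    rewrite /= negb_or; apply/andP; split; apply/eqP => E; subst v.
      by move: k1; rewrite (upw e HeA H) eqxx.
    by case: (upk e HeA H) => E; move: Hn1 Hn2; rewrite E eqxx.
- move=> v Hv; move: (Hv) => /mV [/andP [HvA Hk]|Hvu].
  + move: Hk; rewrite /= negb_or => /andP [/eqP vw /eqP vk].
    have [nu1 nu2] := nu v HvA.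
    rewrite (lB _ Hv) !inE nu1 nu2 /=; have [H1 H2] := cA v HvA; rewrite -H1 -H2; split.
    * apply: (cnt_trans (qN := fun e => (if e == e1 then Vx u1 else if e == e2 then Vx u2
                                            else lo A e) == Vx v) Hr uA uRE HRE).
      - by move=> e He /=; rewrite (proj2 (eB e He)).
      - have ckv : (Vx c == Vx v) = false by rewrite nodeE; apply/eqP => E; apply: vk.
        move=> e He _ /=; case: (boolP (e == e1)) => [/eqP ->|_].
          by rewrite U1 ckv nodeE eq_sym nu1.
        case: (boolP (e == e2)) => [/eqP ->|//].
        by rewrite U2 ckv nodeE eq_sym nu2.
      - by rewrite /= L0 nodeE; have -> : (cw == v) = false by apply/eqP => E; apply: vw.
    * apply: (cnt_trans (qN := fun e => up A e == Vx v) Hr uA uRE HRE).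
      - by move=> e He /=; rewrite (proj1 (eB e He)).
      - by [].
      - by rewrite /= U0 nodeE; have -> : (c == v) = false by apply/eqP => E; apply: vk.
  + have Hlab : lab B v = Cowk by rewrite (lB _ Hv) Hvu.
    have vA : v \notin fV A by apply: fV'.
    rewrite Hlab /=; split; last first.
    * rewrite (cntB (q := fun e => up A e == Vx v) Hr uA) /=;
        last by move=> e He /=; rewrite (proj1 (eB e He)).
      rewrite addn0 (@cnt_only _ _ [::]) // => e.
      apply/negbTE; apply/negP => /andP [HeA /andP [/eqP Hl _]].
      by have := proj1 (endA e HeA v) Hl; rewrite (negbTE vA).
    * rewrite (cntB (q := fun e => (if e == e1 then Vx u1 else if e == e2 then Vx u2
                                            else lo A e) == Vx v) Hr uA) /=;
        last by move=> e He /=; rewrite (proj2 (eB e He)).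
      move: Hvu; rewrite !inE => /orP [/eqP Ev|/eqP Ev]; subst v.
      - rewrite addn0 (@cnt_only _ _ [:: e1]) // => e.
        rewrite inE; case: (boolP (e == e1)) => [/eqP ->|Hn1]; first by rewrite E1 eqxx /= e01.
        case: (boolP (e == e2)) => [/eqP ->|Hn2]; first by rewrite nodeE eq_sym u12 andbF.
        apply/negbTE; apply/negP => /andP [HeA /andP [/eqP Hl _]].
        by have := proj2 (endA e HeA u1) Hl; rewrite (negbTE vA).
      - rewrite addn0 (@cnt_only _ _ [:: e2]) // => e.
        rewrite inE; case: (boolP (e == e1)) => [/eqP ->|Hn1]; first by rewrite nodeE u12 andbF eq_sym n12.
        case: (boolP (e == e2)) => [/eqP ->|Hn2]; first by rewrite E2 eqxx /= e02.
        apply/negbTE; apply/negP => /andP [HeA /andP [/eqP Hl _]].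
        by have := proj2 (endA e HeA u2) Hl; rewrite (negbTE vA).
Qed.

Lemma wstep_ok A B : wstep A B -> good A -> cycle_free A -> good B /\ cycle_free B.
Proof.
case=> [[? [? [? [? [? [? [a1 [a2 [a3 [a4 [a5 [a6 [a7 [a8 [a9 [a10 a11]]]]]]]]]]]]]]]]|].
  exact: rule1 a1 a2 a3 a4 a5 a6 a7 a8 a9 a10 a11.
case=> [[? [? [? [? [? [? [a1 [a2 [a3 [a4 [a5 [a6 [a7 [a8 [a9 [a10 a11]]]]]]]]]]]]]]]]|].
  exact: rule2 a1 a2 a3 a4 a5 a6 a7 a8 a9 a10 a11.
case=> [[? [? [? [? [? [a1 [a2 [a3 [a4 [a5 [a6 [a7 [a8 a9]]]]]]]]]]]]]|].
  exact: rule3 a1 a2 a3 a4 a5 a6 a7 a8 a9.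
case=> [[? [? [? [? [? [a1 [a2 [a3 [a4 [a5 [a6 [a7 [a8 a9]]]]]]]]]]]]]|].
  exact: rule4 a1 a2 a3 a4 a5 a6 a7 a8 a9.
case=> [[? [? [? [a1 [a2 [a3 [a4 [a5 a6]]]]]]]]|].
  exact: rule5 a1 a2 a3 a4 a5 a6.
case=> [[? [? [? [? [? [? [? [a1 [a2 [a3 [a4 [a5 [a6 [a7 [a8 [a9 [a10 a11]]]]]]]]]]]]]]]]]|].
  exact: rule6 a1 a2 a3 a4 a5 a6 a7 a8 a9 a10 a11.
case=> [? [? [? [? [? [? [? [a1 [a2 [a3 [a4 [a5 [a6 [a7 [a8 [a9 [a10 a11]]]]]]]]]]]]]]]]].
exact: rule7 a1 a2 a3 a4 a5 a6 a7 a8 a9 a10 a11.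
Qed.

Lemma wstar_ok A B : wstar A B -> good A /\ cycle_free A -> good B /\ cycle_free B.
Proof.
elim=> [x y H [G C]|x H|x y z _ IH1 _ IH2 H]; [exact: wstep_ok H G C|exact: H|exact: IH2 (IH1 H)].
Qed.

Theorem proposition4p14 (A B : flow) :
  is_flow A -> cycle_free A -> wstar A B -> cycle_free B.
Proof.
move=> HA CA HW; exact: (proj2 (wstar_ok HW (conj (flow_good HA) CA))).
Qed.
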